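(* Let $G$ be a finite group. If $G$ has a subgroup isomorphic to the dihedral group $D_6$ of order $6$ or to the quaternion group $Q_8$ of order $8$, then $G$ is not strongly sequenceable.
   Context: Let $G$ have identity $e$ and let $S\subseteq G\setminus\{e\}$, $|S|=k$. For an ordering $(g_1,\dots,g_k)$ of the elements of $S$ let $h_0=e$, $h_i=g_1\cdots g_i$. The ordering is an $S$-sequencing if $h_0,\dots,h_k$ are pairwise distinct, and a rotational $S$-sequencing if $h_1,\dots,h_k$ are pairwise distinct and $h_k=e$. The group $G$ is strongly sequenceable if for every $S\subseteq G\setminus\{e\}$ there is an $S$-sequencing or a rotational $S$-sequencing (or both). *)

(* Defs.v *)
From HB Require Import structures.
From mathcomp Require Import all_boot all_fingroup all_solvable.
Set Implicit Arguments. Unset Strict Implicit. Unset Printing Implicit Defensive.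

Local Open Scope group_scope.

Definition partial_prod (gT : finGroupType) (s : seq gT) (i : nat) : gT :=
  \prod_(x <- take i s) x.

Definition ordering_of (gT : finGroupType) (S : {set gT}) (s : seq gT) : Prop :=
  uniq s /\ S = [set x in s].

Definition is_S_sequencing (gT : finGroupType) (S : {set gT}) (s : seq gT) : Prop :=
  ordering_of S s /\
  uniq [seq partial_prod s i | i <- iota 0 (size s).+1].

Definition is_rotational_S_sequencing (gT : finGroupType) (S : {set gT})
    (s : seq gT) : Prop :=
  ordering_of S s /\
  uniq [seq partial_prod s i | i <- iota 1 (size s)] /\
  partial_prod s (size s) = 1.

Definition strongly_sequenceable (gT : finGroupType) : Prop :=
  forall S : {set gT}, 1 \notin S ->
    exists s : seq gT, is_S_sequencing S s \/ is_rotational_S_sequencing S s.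

(* Main.v *)
Require Import Defs.
From HB Require Import structures.
From mathcomp Require Import all_boot all_fingroup all_solvable.
From mathcomp Require Import zify.

Module Helpers.
Set Implicit Arguments. Unset Strict Implicit. Unset Printing Implicit Defensive.
Local Open Scope group_scope.
Definition mt n c e a b := ((a %% n + b %% n * c ^ (a %/ n) + e * ((a %/ n + b %/ n) %/ 2)) %% n + n * ((a %/ n + b %/ n) %% 2))%N.
Definition ppn (m : nat -> nat -> nat) t i := foldr m 0%N (take i t).
Definition bad m (S0 : seq nat) := all (fun t => ~~ uniq [seq ppn m t i | i <- iota 0 (size t).+1] && ~~ (uniq [seq ppn m t i | i <- iota 1 (size t)] && (ppn m t (size t) == 0%N))) (permutations S0).

Section Key.
Variables (gT : finGroupType) (x y : gT) (n c e : nat).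
Hypotheses (n_gt0 : (0 < n)%N) (ox : #[x] = n) (nXy : y \notin <[x]>)
  (yx : y * x = x ^+ c * y) (y2 : y ^+ 2 = x ^+ e).

Let xn : x ^+ n = 1. Proof. by rewrite -ox expg_order. Qed.

Definition phi a := x ^+ (a %% n) * y ^+ (a %/ n).

Lemma yxk k : y * x ^+ k = x ^+ (k * c) * y.
Proof.
elim: k => [|k IH]; first by rewrite !expg0 mulg1 mul1g.
by rewrite expgS mulgA yx -mulgA IH mulgA -expgD mulSn.
Qed.

Lemma key4 i j k l : (j < 2)%N -> (l < 2)%N ->
  x ^+ (i + k * c ^ j + e * ((j + l) %/ 2)) * y ^+ ((j + l) %% 2) =
  x ^+ i * y ^+ j * (x ^+ k * y ^+ l).
Proof.
case: j => [|[|//]] _; case: l => [|[|//]] _.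
- have -> : ((0 + 0) %% 2 = 0)%N by [].
  have -> : ((0 + 0) %/ 2 = 0)%N by [].
  by rewrite !expg0 !mulg1 expn0 muln1 muln0 addn0 expgD.
- have -> : ((0 + 1) %% 2 = 1)%N by [].
  have -> : ((0 + 1) %/ 2 = 0)%N by [].
  by rewrite !expg0 !mulg1 expn0 muln1 muln0 addn0 expgD !mulgA.
- have -> : ((1 + 0) %% 2 = 1)%N by [].
  have -> : ((1 + 0) %/ 2 = 0)%N by [].
  by rewrite !expg0 !mulg1 muln0 addn0 expn1 expgD -!mulgA yxk.
- have -> : ((1 + 1) %% 2 = 0)%N by [].
  have -> : ((1 + 1) %/ 2 = 1)%N by [].
  rewrite expg0 mulg1 muln1 expn1 !expgD.
  by rewrite !expg1 -!mulgA (mulgA y) yxk -y2 expgS expg1 !mulgA.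
Qed.

Lemma mt_lt a b : (mt n c e a b < 2 * n)%N.
Proof.
rewrite /mt; set u := (_ %% n)%N; set v := (_ %% 2)%N.
have hu : (u < n)%N by rewrite ltn_mod.
have hv : (v < 2)%N by rewrite ltn_mod.
case: v hv => [|[|//]] _; rewrite ?muln0 ?muln1 ?addn0; lia.
Qed.

Lemma phi_mul a b : (a < 2 * n)%N -> (b < 2 * n)%N ->
  phi (mt n c e a b) = phi a * phi b.
Proof.
move=> ha hb; rewrite /phi /mt.
have hj : (a %/ n < 2)%N by rewrite ltn_divLR // mulnC.
have hl : (b %/ n < 2)%N by rewrite ltn_divLR // mulnC.
set u := ((a %% n + _ + _) %% n)%N; set v := ((a %/ n + _) %% 2)%N.
have hu : (u < n)%N by rewrite ltn_mod.
rewrite [(u + _)%N]addnC mulnC modnMDl divnMDl // (modn_small hu) (divn_small hu) addn0.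
by rewrite /u expg_mod // -key4.
Qed.

Lemma phi_inj : {in [pred a | (a < 2 * n)%N] &, injective phi}.
Proof.
move=> a b; rewrite !inE => ha hb.
have hj : (a %/ n < 2)%N by rewrite ltn_divLR // mulnC.
have hl : (b %/ n < 2)%N by rewrite ltn_divLR // mulnC.
rewrite /phi => E.
have Ej : a %/ n = b %/ n.
  apply/eqP; apply: contraNT nXy => ne.
  have: y ^+ (a %/ n) * (y ^+ (b %/ n))^-1 \in <[x]>.
    have ->: y ^+ (a %/ n) * (y ^+ (b %/ n))^-1 = (x ^+ (a %% n))^-1 * x ^+ (b %% n).
      by rewrite -[RHS](mulgK (y ^+ (b %/ n))) -(mulgA _ (x ^+ _)) -E mulKg.
    by rewrite groupM ?groupV ?mem_cycle.
  by move: hj hl ne; case: (a %/ n) => [|[|//]]; case: (b %/ n) => [|[|//]] //= _ _ _;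
     rewrite ?expg0 ?expg1 ?invg1 ?mul1g ?mulg1 // groupV.
move: E; rewrite Ej => /mulIg /eqP; rewrite eq_expg_mod_order ox !modn_mod => /eqP Ei.
by rewrite (divn_eq a n) (divn_eq b n) Ej Ei.
Qed.

Lemma phi0 : phi 0 = 1.
Proof. by rewrite /phi mod0n div0n !expg0 mulg1. Qed.

Lemma foldr_lt l : (foldr (mt n c e) 0%N l < 2 * n)%N.
Proof. by case: l => [|a l] /=; [rewrite muln_gt0 | apply: mt_lt]. Qed.

Lemma prod_map l : all (fun a => a < 2 * n)%N l ->
  \prod_(g <- map phi l) g = phi (foldr (mt n c e) 0%N l).
Proof.
elim: l => [|a l IH] /=; first by rewrite big_nil phi0.
by case/andP=> ha hl; rewrite big_cons IH // phi_mul // foldr_lt.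
Qed.

Lemma key (S0 : seq nat) : all (fun a => a < 2 * n)%N S0 -> uniq S0 -> 0%N \notin S0 ->
  bad (mt n c e) S0 -> ~ strongly_sequenceable gT.
Proof.
move=> hS0 uS0 nS0 hbad ss.
have inj := phi_inj.
set S := [set g in map phi S0].
have S1 : 1 \notin S.
  rewrite inE; apply/mapP => -[a aS0 E].
  move/allP: hS0 => /(_ a aS0) ha.
  have a0 : a = 0%N by apply: inj; rewrite ?inE ?muln_gt0 // -E phi0.
  by move: nS0; rewrite -a0 aS0.
have [s hs] := ss S S1.
have [us eS] : ordering_of S s by case: hs => -[].
pose f g := nth 0%N S0 (index g (map phi S0)).
pose t := map f s.
have sS : forall g, g \in s -> g \in map phi S0.
  move=> g gs; have: g \in S by rewrite eS inE. by rewrite inE.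
have st : s = map phi t.
  rewrite /t -map_comp -[LHS]map_id; apply/eq_in_map => g /sS gS /=.
  rewrite /f -(nth_map 0%N (phi 0%N)); first by rewrite nth_index.
  by rewrite -(size_map phi) index_mem.
have tS0 : forall a, a \in t -> a \in S0.
  move=> a /mapP[g /sS gS ->]; rewrite /f mem_nth //.
  by rewrite -(size_map phi) index_mem.
have tlt : all (fun a => a < 2 * n)%N t.
  by apply/allP => a /tS0; move/allP: hS0; apply.
have ut : uniq t by move: us; rewrite st; apply: map_uniq.
have pt : perm_eq t S0.
  apply: uniq_perm => // a; apply/idP/idP; first exact: tS0.
  move=> aS0; have : phi a \in S by rewrite inE map_f.
  rewrite eS inE.
  rewrite st => /mapP[b bt E].
  have -> : a = b.
    apply: inj; rewrite ?inE //.
    - by move/allP: hS0; apply.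
    - by move/allP: tlt; apply.
  by [].
have tperm : t \in permutations S0 by rewrite mem_permutations.
move/allP: hbad => /(_ t tperm) /andP[h1 h2].
have pp : forall i, partial_prod s i = phi (ppn (mt n c e) t i).
  move=> i; rewrite /partial_prod /ppn st -map_take prod_map //.
  by apply/allP => a /mem_take; move/allP: tlt; apply.
have ppi : forall r, uniq [seq partial_prod s i | i <- r] = uniq [seq ppn (mt n c e) t i | i <- r].
  move=> r; rewrite (eq_map pp) (map_comp phi) map_inj_in_uniq //.
  by move=> u v /mapP[i _ ->] /mapP[j _ ->]; apply: inj; rewrite inE foldr_lt.
have szt : size s = size t by rewrite st size_map.
case: hs => [[_ hu] | [_ [hu he]]].
  by move: hu; rewrite ppi szt (negbTE h1).
move: h2; rewrite -ppi -szt hu /= ; apply/negP; rewrite negbK.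
apply/eqP; apply: inj; rewrite ?inE ?muln_gt0 ?foldr_lt // phi0 -pp. exact: he.
Qed.
End Key.
Lemma conj_inv_rel (gT : finGroupType) (x y : gT) : x ^ y = x^-1 -> y * x = x^-1 * y.
Proof.
move=> xy; have h : x^-1 ^ y = x by rewrite conjVg xy invgK.
by rewrite -{1}h conjgE !mulgA mulgV mul1g.
Qed.
End Helpers.
Import Helpers.
Local Open Scope group_scope.

Theorem theorem6p1 (gT : finGroupType) :
  (exists H : {group gT}, (H \isog 'D_6)%g \/ (H \isog 'Q_8)%g) ->
  ~ strongly_sequenceable gT.
Proof.
move=> [H [isoD|isoQ]].
- case/(isoGrpP _ (Grp_dihedral (isT : (1 < 3)%N))): isoD.
  rewrite card_dihedral // => oH.
  case/existsP=> -[x y] /= /eqP[defG x3 y2 xy].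
  have{} defG: <[x]> * <[y]> = H.
    by rewrite -norm_joinEr // norms_cycle xy groupV cycle_id.
  have ox3 : (#[x] <= 3)%N by rewrite dvdn_leq // order_dvdn x3.
  have oy2 : (#[y] <= 2)%N by rewrite dvdn_leq // order_dvdn y2.
  have mc := mul_cardG <[x]> <[y]>.
  rewrite defG oH -!orderE in mc.
  have k1 : (0 < #|<[x]>%G :&: <[y]>%G|)%N by exact: (cardG_gt0 (<[x]> :&: <[y]>)%G). rewrite -muln2 in mc.
have ox : #[x] = 3%N by nia.
  have nXy : y \notin <[x]>.
    apply/negP => yX; move: mc; rewrite (setIidPr _) -?orderE; last by rewrite cycle_subG.
    have := order_gt0 y; nia.
  apply: (@key _ x y 3 2 0 (isT : (0 < 3)%N) ox nXy _ _ [:: 1; 2; 3; 4; 5]%N) => //.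
  + by rewrite (conj_inv_rel xy) invg_expg ox.
- have [[x y] [oH xH ox yHx] [oy y2 xy]] := generators_quaternion (isT : (2 < 3)%N) isoQ.
  have nXy : y \notin <[x]> by move: yHx; rewrite inE => /andP[].
  apply: (@key _ x y 4 3 2 (isT : (0 < 4)%N) ox nXy _ _ [:: 1; 3; 4; 5; 6; 7]%N) => //.
  + by rewrite (conj_inv_rel xy) invg_expg ox.
Qed.
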